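(* Let $(Q,P)$ be a weakly quasi-lattice ordered group and let $\Lambda$ be a finitely aligned $P$-graph (i.e. $\mathrm{FA}(\Lambda)=\Lambda$). Then the map $$G^{\mathrm{Spi}}_\Lambda\to\mathcal{G}(\Lambda),\qquad [\alpha,\beta,x]\mapsto(\alpha\cdot x,\ d(\alpha)d(\beta)^{-1},\ \beta\cdot x)$$ is a topological groupoid isomorphism. Moreover, the reductions $G^{\mathrm{Spi}}_\Lambda|_{\partial\Lambda}$ and $\partial\mathcal{G}(\Lambda)$ are topologically isomorphic.
   Context: $(Q,P)$ weakly quasi-lattice ordered: $Q$ a discrete group, $P\subseteq Q$ a subsemigroup containing the identity $e$ with $P\cap P^{-1}=\{e\}$, and, with $p\le r$ meaning $pq=r$ for some $q\in P$, any two elements of $P$ with a common upper bound have a least common upper bound. A $P$-graph is a countable small category $\Lambda$ (identities $\Lambda^{(0)}$, range/source $r,s$) with a functor $d:\Lambda\to P$ with unique factorisation (if $d(\lambda)=pq$ there are unique $\mu,\nu$ with $\lambda=\mu\nu$, $d(\mu)=p$, $d(\nu)=q$). Write $\Lambda^m=d^{-1}(m)$, $\lambda\Lambda=\{\lambda\mu: s(\lambda)=r(\mu)\}$, $\mu\preceq\lambda$ iff $\lambda\in\mu\Lambda$. $\Lambda$ is finitely aligned if for all $\mu,\nu$ there is finite $J$ with $\mu\Lambda\cap\nu\Lambda=\bigcup_{\kappa\in J}\kappa\Lambda$. A filter is a nonempty hereditary and directed subset of $\Lambda$ (w.r.t. $\preceq$); $\mathcal{F}(\Lambda)$ the filters,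 $\mathcal{U}(\Lambda)$ the maximal filters; each filter $x$ contains a unique $r(x)\in\Lambda^{(0)}$. For a filter $x$ with $r(x)=s(\alpha)$, $\alpha\cdot x=\{\zeta: \zeta\preceq\alpha\gamma\text{ for some }\gamma\in x\}$. $\mathcal{F}(\Lambda)$ has the subspace topology from $\mathcal{P}(\Lambda)\cong\{0,1\}^\Lambda$ (product topology). Since $\Lambda$ is finitely aligned, the path space is $\mathcal{F}(\Lambda)$. For $x\in\mathcal{F}(\Lambda)$, $m\in P$ with $x\cap\Lambda^m\neq\emptyset$ (write $x\in\mathrm{dom}(m)$), $x(0,m)$ is the unique element of $x\cap\Lambda^m$ and $x\cdot m=\{\mu: x(0,m)\mu\in x\}$. The path groupoid $\mathcal{G}(\Lambda)$ is the set of $(x,q,y)\in\mathcal{F}(\Lambda)\times Q\times\mathcal{F}(\Lambda)$ such that $q=mn^{-1}$, $x\in\mathrm{dom}(m)$, $y\in\mathrm{dom}(n)$, $x\cdot m=y\cdot n$ for some $m,n\in P$; product $(x,q,y)(y,r,z)=(x,qr,z)$, inverse $(y,q^{-1},x)$; topology with basis $\{(x,mn^{-1},y)\in\mathcal{G}(\Lambda): x\in U, y\in V, x\cdot m=y\cdot n\}$, $m,n\in P$, $U,V$ open. The boundary-path groupoid $\partial\mathcal{G}(\Lambda)$ is the reduction of $\mathcal{G}(\Lambda)$ (unit space identified with $\mathcal{F}(\Lambda)$ via $x\mapsto(x,e,x)$) to the closure $\partial\Lambda$ of $\mathcal{U}(\Lambda)$ in $\mathcal{F}(\Lambda)$. Spielberg's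 groupoid: for $\alpha\in\Lambda$ and $\beta_1,\dots,\beta_n\in\alpha\Lambda\setminus\{\alpha\}$, put $E=\alpha\Lambda\setminus\bigcup_i\beta_i\Lambda$ and $\hat E=\{x\in\mathcal{F}(\Lambda): x\cap\gamma\Lambda\subseteq E\text{ for some }\gamma\in x\}$; the sets $\hat E$ form a basis of a topology $\tau$ on $\mathcal{F}(\Lambda)$. On $\{(\alpha,\beta,x)\in\Lambda\times\Lambda\times\mathcal{F}(\Lambda): s(\alpha)=s(\beta)=r(x)\}$ set $(\alpha,\beta,x)\sim(\alpha',\beta',x')$ iff there are $y\in\mathcal{F}(\Lambda)$, $\gamma,\gamma'\in\Lambda$ with $x=\gamma\cdot y$, $x'=\gamma'\cdot y$, $\alpha\gamma=\alpha'\gamma'$, $\beta\gamma=\beta'\gamma'$; this is an equivalence relation, and $G^{\mathrm{Spi}}_\Lambda$ is the set of classes $[\alpha,\beta,x]$. A pair $([\alpha,\beta,x],[\gamma,\delta,y])$ is composable iff $\beta\cdot x=\gamma\cdot y$; then there are $z\in\mathcal{F}(\Lambda)$, $\xi,\eta\in\Lambda$ with $x=\xi\cdot z$, $y=\eta\cdot z$, $\beta\xi=\gamma\eta$, and the product is $[\alpha\xi,\delta\eta,z]$; inverse $[\alpha,\beta,x]^{-1}=[\beta,\alpha,x]$. Its topology has basis the sets $[\alpha,\beta,B]=\{[\alpha,\beta,x]: x\in B\}$ for $B$ in a basis of $\tau$. $G^{\mathrm{Spi}}_\Lambda|_{\partial\Lambda}$ is its reduction to $\partial\Lambda$ (unit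 space identified with $\mathcal{F}(\Lambda)$ via $x\mapsto[r(x),r(x),x]$). *)

(* Defs.v *)
From Stdlib Require Import List.
Import ListNotations.

Record Group := {
  Qc :> Type;
  qmul : Qc -> Qc -> Qc;
  qone : Qc;
  qinv : Qc -> Qc;
  qmul_assoc : forall a b c, qmul a (qmul b c) = qmul (qmul a b) c;
  qmul_1l : forall a, qmul qone a = a;
  qmul_1r : forall a, qmul a qone = a;
  qmul_Vl : forall a, qmul (qinv a) a = qone;
  qmul_Vr : forall a, qmul a (qinv a) = qone
}.
Arguments qmul {g}. Arguments qone {g}. Arguments qinv {g}.

Definition Ple {Q : Group} (P : Q -> Prop) (p r : Q) : Prop :=
  exists q, P q /\ qmul p q = r.

Record WQLO := {
  Qgrp :> Group;
  Pset : Qgrp -> Prop;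
  P_one : Pset qone;
  P_mul : forall p q, Pset p -> Pset q -> Pset (qmul p q);
  P_cap_Pinv : forall p, Pset p -> Pset (qinv p) -> p = qone;
  P_wqlo : forall p q, Pset p -> Pset q ->
    (exists r, Pset r /\ Ple Pset p r /\ Ple Pset q r) ->
    exists l, Pset l /\ Ple Pset p l /\ Ple Pset q l /\
      (forall u, Pset u -> Ple Pset p u -> Ple Pset q u -> Ple Pset l u)
}.

Record PGraph (W : WQLO) := {
  Obj : Type;
  Mor : Type;
  vid : Obj -> Mor;                 (* identity morphisms = Lambda^(0) *)
  rng : Mor -> Obj;
  src : Mor -> Obj;
  comp : Mor -> Mor -> Mor;         (* composition, meaningful when src mu = rng nu *)
  deg : Mor -> W;
  Obj_countable : exists f : Obj -> nat, forall a b, f a = f b -> a = b;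
  Mor_countable : exists f : Mor -> nat, forall a b, f a = f b -> a = b;
  src_vid : forall v, src (vid v) = v;
  rng_vid : forall v, rng (vid v) = v;
  rng_comp : forall m n, src m = rng n -> rng (comp m n) = rng m;
  src_comp : forall m n, src m = rng n -> src (comp m n) = src n;
  comp_vid_l : forall l, comp (vid (rng l)) l = l;
  comp_vid_r : forall l, comp l (vid (src l)) = l;
  comp_assoc : forall a b c, src a = rng b -> src b = rng c ->
     comp a (comp b c) = comp (comp a b) c;
  deg_P : forall l, Pset W (deg l);
  deg_vid : forall v, deg (vid v) = qone;
  deg_comp : forall m n, src m = rng n -> deg (comp m n) = qmul (deg m) (deg n);
  unique_factorisation : forall l p q, Pset W p -> Pset W q ->
     deg l = qmul p q ->
     exists m n, (src m = rng n /\ l = comp m n /\ deg m = p /\ deg n = q) /\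
       forall m' n', src m' = rng n' -> l = comp m' n' -> deg m' = p -> deg n' = q ->
         m' = m /\ n' = n
}.
Arguments Obj {W}. Arguments Mor {W}. Arguments vid {W p0}. Arguments rng {W p0}.
Arguments src {W p0}. Arguments comp {W p0}. Arguments deg {W p0}.

Section PG.
Context {W : WQLO} (L : PGraph W).

Definition preceq (m l : Mor L) : Prop := exists n, src m = rng n /\ l = comp m n.

Definition finitely_aligned : Prop :=
  forall m n : Mor L, exists J : list (Mor L),
    forall l, (preceq m l /\ preceq n l) <-> exists k, In k J /\ preceq k l.

Definition same (A B : Mor L -> Prop) : Prop := forall z, A z <-> B z.

Definition is_filter (x : Mor L -> Prop) : Prop :=
  (exists l, x l) /\
  (forall m l, preceq m l -> x l -> x m) /\
  (forall l m, x l -> x m -> exists n, x n /\ preceq l n /\ preceq m n).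

Definition Filt := { x : Mor L -> Prop | is_filter x }.

(* topology on F(Λ): subspace of the product topology on {0,1}^Λ,
   basis = cylinder sets *)
Definition cyl (A B : list (Mor L)) (x : Filt) : Prop :=
  (forall a, In a A -> proj1_sig x a) /\ (forall b, In b B -> ~ proj1_sig x b).

Definition F_open (U : Filt -> Prop) : Prop :=
  forall x, U x -> exists A B, cyl A B x /\ forall y, cyl A B y -> U y.

Definition maximal_filter (x : Filt) : Prop :=
  forall y : Filt, (forall l, proj1_sig x l -> proj1_sig y l) ->
    forall l, proj1_sig y l -> proj1_sig x l.

Definition bdry (x : Filt) : Prop :=
  forall U, F_open U -> U x -> exists y, U y /\ maximal_filter y.

(* x ∈ dom(m), x·m  (x(0,m) is the unique element of x of degree m) *)
Definition in_dom (x : Filt) (m : W) : Prop :=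
  exists l, proj1_sig x l /\ deg l = m.

Definition shift (x : Filt) (m : W) (mu : Mor L) : Prop :=
  exists l, proj1_sig x l /\ deg l = m /\ src l = rng mu /\ proj1_sig x (comp l mu).

Definition rfilt (x : Filt) (v : Obj L) : Prop := proj1_sig x (vid v).

(* alpha · x  (used when r(x) = s(alpha)) *)
Definition dot (a : Mor L) (x : Filt) (z : Mor L) : Prop :=
  exists g, proj1_sig x g /\ src a = rng g /\ preceq z (comp a g).

End PG.

Record TopGroupoid := {
  gcar :> Type;
  gcomposable : gcar -> gcar -> Prop;
  gprod : gcar -> gcar -> gcar -> Prop;     (* gprod a b c : c = a b *)
  ginv : gcar -> gcar -> Prop;              (* ginv a b : b = a^{-1} *)
  gopen : (gcar -> Prop) -> Prop
}.

Definition bijective {A B : Type} (f : A -> B) : Prop :=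
  (forall a a', f a = f a' -> a = a') /\ (forall b, exists a, f a = b).

Definition TG_iso (G H : TopGroupoid) (f : G -> H) : Prop :=
  bijective f /\
  (forall a b, gcomposable G a b <-> gcomposable H (f a) (f b)) /\
  (forall a b c, gprod G a b c <-> gprod H (f a) (f b) (f c)) /\
  (forall a b, ginv G a b <-> ginv H (f a) (f b)) /\
  (forall V : H -> Prop, gopen H V <-> gopen G (fun a => V (f a))).

(* reduction of G to a set X of units: elements g with r(g)=g g^{-1} ∈ X and
   s(g)=g^{-1} g ∈ X; subspace topology *)
Definition in_reduction (G : TopGroupoid) (X : G -> Prop) (g : G) : Prop :=
  exists h u w, ginv G g h /\ gprod G g h u /\ gprod G h g w /\ X u /\ X w.

Definition reduction (G : TopGroupoid) (X : G -> Prop) : TopGroupoid := {|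
  gcar := { g : G | in_reduction G X g };
  gcomposable := fun a b => gcomposable G (proj1_sig a) (proj1_sig b);
  gprod := fun a b c => gprod G (proj1_sig a) (proj1_sig b) (proj1_sig c);
  ginv := fun a b => ginv G (proj1_sig a) (proj1_sig b);
  gopen := fun U => exists V, gopen G V /\ forall g, U g <-> V (proj1_sig g)
|}.

Section Groupoids.
Context {W : WQLO} (L : PGraph W).

Definition inG (t : Filt L * W * Filt L) : Prop :=
  let '(x, q, y) := t in
  exists m n, Pset W m /\ Pset W n /\ q = qmul m (qinv n) /\
    in_dom L x m /\ in_dom L y n /\ same L (shift L x m) (shift L y n).

Definition GPath := { t : Filt L * W * Filt L | inG t }.

Definition gp_x (g : GPath) : Filt L := fst (fst (proj1_sig g)).
Definition gp_q (g : GPath) : W := snd (fst (proj1_sig g)).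
Definition gp_y (g : GPath) : Filt L := snd (proj1_sig g).

Definition Zbasic (m n : W) (U V : Filt L -> Prop) (g : GPath) : Prop :=
  gp_q g = qmul m (qinv n) /\ in_dom L (gp_x g) m /\ in_dom L (gp_y g) n /\
  same L (shift L (gp_x g) m) (shift L (gp_y g) n) /\ U (gp_x g) /\ V (gp_y g).

Definition GPath_open (O : GPath -> Prop) : Prop :=
  forall g, O g -> exists m n U V, Pset W m /\ Pset W n /\ F_open L U /\ F_open L V /\
    Zbasic m n U V g /\ forall g', Zbasic m n U V g' -> O g'.

Definition PathTG : TopGroupoid := {|
  gcar := GPath;
  gcomposable := fun a b => gp_y a = gp_x b;
  gprod := fun a b c => gp_y a = gp_x b /\
     proj1_sig c = (gp_x a, qmul (gp_q a) (gp_q b), gp_y b);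
  ginv := fun a b => proj1_sig b = (gp_y a, qinv (gp_q a), gp_x a);
  gopen := GPath_open
|}.

Definition path_units_bd (u : PathTG) : Prop :=
  exists x, bdry L x /\ proj1_sig u = (x, qone, x).

Definition Triple := (Mor L * Mor L * Filt L)%type.

Definition valid (t : Triple) : Prop :=
  let '(a, b, x) := t in src a = src b /\ rfilt L x (src a).

Definition spi_rel (t t' : Triple) : Prop :=
  let '(a, b, x) := t in let '(a', b', x') := t' in
  exists (y : Filt L) (g g' : Mor L),
    rfilt L y (src g) /\ rfilt L y (src g') /\
    src a = rng g /\ src b = rng g /\ src a' = rng g' /\ src b' = rng g' /\
    same L (proj1_sig x) (dot L g y) /\ same L (proj1_sig x') (dot L g' y) /\
    comp a g = comp a' g' /\ comp b g = comp b' g'.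

Definition SpiG := { C : Triple -> Prop |
  exists t, valid t /\ forall u, C u <-> (valid u /\ spi_rel t u) }.

Definition spi_composable (A B : SpiG) : Prop :=
  exists a b x c d y, proj1_sig A (a, b, x) /\ proj1_sig B (c, d, y) /\
    same L (dot L b x) (dot L c y).

Definition spi_prod (A B C : SpiG) : Prop :=
  exists a b x c d y (z : Filt L) xi eta,
    proj1_sig A (a, b, x) /\ proj1_sig B (c, d, y) /\
    same L (dot L b x) (dot L c y) /\
    rfilt L z (src xi) /\ rfilt L z (src eta) /\
    src a = rng xi /\ src b = rng xi /\ src c = rng eta /\ src d = rng eta /\
    same L (proj1_sig x) (dot L xi z) /\ same L (proj1_sig y) (dot L eta z) /\
    comp b xi = comp c eta /\
    proj1_sig C (comp a xi, comp d eta, z).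

Definition spi_inv (A B : SpiG) : Prop :=
  exists a b x, proj1_sig A (a, b, x) /\ proj1_sig B (b, a, x).

(* basis of τ: the sets Ê, E = αΛ \ ⋃_i β_i Λ, β_i ∈ αΛ \ {α} *)
Definition tau_basic (B : Filt L -> Prop) : Prop :=
  exists (a : Mor L) (bs : list (Mor L)),
    (forall b, In b bs -> preceq L a b /\ b <> a) /\
    forall x, B x <-> exists g, proj1_sig x g /\
      forall z, proj1_sig x z -> preceq L g z ->
        (preceq L a z /\ forall b, In b bs -> ~ preceq L b z).

Definition Sbasic (a b : Mor L) (B : Filt L -> Prop) (C : SpiG) : Prop :=
  exists x, B x /\ proj1_sig C (a, b, x).

Definition SpiG_open (O : SpiG -> Prop) : Prop :=
  forall C, O C -> exists a b B, tau_basic B /\ Sbasic a b B C /\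
    forall C', Sbasic a b B C' -> O C'.

Definition SpiTG : TopGroupoid := {|
  gcar := SpiG;
  gcomposable := spi_composable;
  gprod := spi_prod;
  ginv := spi_inv;
  gopen := SpiG_open
|}.

Definition spi_units_bd (U : SpiTG) : Prop :=
  exists x v, bdry L x /\ rfilt L x v /\ proj1_sig U (vid v, vid v, x).

End Groupoids.

(* Main.v *)
Require Import Defs.
From Stdlib Require Import List Classical FunctionalExtensionality PropExtensionality ProofIrrelevance ClassicalEpsilon.
Import ListNotations.

Section Grp.
Context {G : Group}.
Lemma g_lcancel (a b c : G) : qmul a b = qmul a c -> b = c.
Proof. intro H. rewrite <- (qmul_1l _ b), <- (qmul_1l _ c), <- (qmul_Vl _ a),
  <- !qmul_assoc, H. reflexivity. Qed.
Lemma g_rcancel (a b c : G) : qmul b a = qmul c a -> b = c.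
Proof. intro H. rewrite <- (qmul_1r _ b), <- (qmul_1r _ c), <- (qmul_Vr _ a),
  !qmul_assoc, H. reflexivity. Qed.
Lemma g_inv_mul (a b : G) : qinv (qmul a b) = qmul (qinv b) (qinv a).
Proof. apply (g_lcancel (qmul a b)). rewrite qmul_Vr.
  rewrite !qmul_assoc. rewrite <- (qmul_assoc _ a b (qinv b)), qmul_Vr, qmul_1r, qmul_Vr.
  reflexivity. Qed.
Lemma g_inv_inv (a : G) : qinv (qinv a) = a.
Proof. apply (g_lcancel (qinv a)). rewrite qmul_Vr, qmul_Vl. reflexivity. Qed.
Lemma g_inv1 : qinv (@qone G) = qone.
Proof. apply (g_lcancel qone). rewrite qmul_Vr, qmul_1l. reflexivity. Qed.
Lemma g_key (a b c d g g' : G) : qmul a (qinv b) = qmul c (qinv d) ->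
  qmul a g = qmul c g' -> qmul b g = qmul d g'.
Proof. intros H1 H2.
  assert (H3 : qmul b (qinv a) = qmul d (qinv c)).
  { rewrite <- (g_inv_inv b), <- (g_inv_inv d), <- !g_inv_mul, H1. reflexivity. }
  assert (E1 : qmul b g = qmul (qmul b (qinv a)) (qmul a g)).
  { rewrite !qmul_assoc, <- (qmul_assoc _ b (qinv a) a), qmul_Vl, qmul_1r. reflexivity. }
  assert (E2 : qmul d g' = qmul (qmul d (qinv c)) (qmul c g')).
  { rewrite !qmul_assoc, <- (qmul_assoc _ d (qinv c) c), qmul_Vl, qmul_1r. reflexivity. }
  rewrite E1, E2, H3, H2. reflexivity. Qed.
End Grp.
Section PGL.
Context {W : WQLO} (L : PGraph W).
Local Notation pre := (preceq L).
Local Notation M := (Mor L).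

Lemma pre_refl (l : M) : pre l l.
Proof. exists (vid (src l)). split. now rewrite rng_vid. now rewrite comp_vid_r. Qed.

Lemma pre_comp (a g : M) : src a = rng g -> pre a (comp a g).
Proof. intro H. now exists g. Qed.

Lemma pre_rng (a l : M) : pre a l -> rng l = rng a.
Proof. intros [k [H1 H2]]. subst. now apply rng_comp. Qed.

Lemma pre_trans (a b c : M) : pre a b -> pre b c -> pre a c.
Proof. intros [k [H1 H2]] [k' [H3 H4]]. subst.
  exists (comp k k'). split.
  - rewrite rng_comp; auto. rewrite src_comp in H3; auto.
  - rewrite src_comp in H3; auto. symmetry. apply comp_assoc; auto. Qed.

Lemma vid_pre (l : M) : pre (vid (rng l)) l.
Proof. exists l. split. now rewrite src_vid. now rewrite comp_vid_l. Qed.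

Lemma pre_lmul (a g h : M) : src a = rng g -> pre g h -> pre (comp a g) (comp a h).
Proof. intros H [k [H1 H2]]. subst. exists k. split.
  rewrite src_comp; auto. apply comp_assoc; auto. Qed.

Lemma lcancel (a m n : M) : src a = rng m -> src a = rng n -> comp a m = comp a n -> m = n.
Proof. intros H1 H2 E.
  assert (Dm : deg (comp a m) = qmul (deg a) (deg m)) by (apply deg_comp; auto).
  destruct (unique_factorisation W L (comp a m) (deg a) (deg m) (deg_P W L a) (deg_P W L m) Dm)
    as [m0 [n0 [_ U]]].
  destruct (U a m H1 eq_refl eq_refl eq_refl) as [_ Em].
  assert (Dn : deg n = deg m).
  { apply (g_lcancel (deg a)). rewrite <- !deg_comp; auto. now rewrite E. }
  destruct (U a n H2 E eq_refl Dn) as [_ En]. congruence. Qed.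

Lemma pre_lcancel (a g h : M) : src a = rng g -> src a = rng h ->
  pre (comp a g) (comp a h) -> pre g h.
Proof. intros H1 H2 [k [H3 H4]]. rewrite src_comp in H3; auto.
  exists k. split; auto. rewrite <- comp_assoc in H4; auto.
  apply lcancel in H4; auto. rewrite rng_comp; auto. Qed.

Lemma pre_same_deg (a b l : M) : pre a l -> pre b l -> deg a = deg b -> a = b.
Proof. intros [k1 [H1 E1]] [k2 [H2 E2]] D.
  assert (Dl : deg l = qmul (deg a) (deg k1)) by (subst; apply deg_comp; auto).
  destruct (unique_factorisation W L l (deg a) (deg k1) (deg_P W L a) (deg_P W L k1) Dl)
    as [m0 [n0 [_ U]]].
  destruct (U a k1 H1 E1 eq_refl eq_refl) as [Ea _].
  assert (Dk : deg k2 = deg k1).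
  { apply (g_lcancel (deg a)). rewrite <- Dl, D, E2. symmetry. apply deg_comp; auto. }
  destruct (U b k2 H2 E2 (eq_sym D) Dk) as [Eb _]. congruence. Qed.

Lemma pre_vid (v : Obj L) (l : M) : pre (vid v) l -> rng l = v.
Proof. intro H. apply pre_rng in H. now rewrite rng_vid in H. Qed.

Definition pdot (a : M) (X : M -> Prop) (z : M) : Prop :=
  exists g, X g /\ src a = rng g /\ pre z (comp a g).
Definition pshift (Y : M -> Prop) (m : W) (mu : M) : Prop :=
  exists l, Y l /\ deg l = m /\ src l = rng mu /\ Y (comp l mu).

Section F.
Variable X : M -> Prop.
Hypothesis HX : is_filter L X.
Lemma f_her m l : pre m l -> X l -> X m.
Proof. destruct HX as [_ [H _]]. apply H. Qed.
Lemma f_dir l m : X l -> X m -> exists n, X n /\ pre l n /\ pre m n.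
Proof. destruct HX as [_ [_ H]]. apply H. Qed.
Lemma f_ne : exists l, X l.
Proof. now destruct HX. Qed.
Lemma f_vert l : X l -> X (vid (rng l)).
Proof. intro H. eapply f_her; eauto. apply vid_pre. Qed.
Lemma f_vert_uniq v w : X (vid v) -> X (vid w) -> v = w.
Proof. intros H1 H2. destruct (f_dir _ _ H1 H2) as [n [_ [A B]]].
  apply pre_vid in A. apply pre_vid in B. congruence. Qed.
Lemma f_rng v l : X (vid v) -> X l -> rng l = v.
Proof. intros H1 H2. apply f_vert in H2. eapply f_vert_uniq; eauto. Qed.
Lemma f_same_deg a b : X a -> X b -> deg a = deg b -> a = b.
Proof. intros H1 H2 D. destruct (f_dir _ _ H1 H2) as [n [_ [A B]]].
  eapply pre_same_deg; eauto. Qed.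

End F.
Lemma pdot_filter X (HX : is_filter L X) a : X (vid (src a)) -> is_filter L (pdot a X).
Proof. intro Hv. split; [|split].
  - exists a. exists (vid (src a)). split; auto. split. now rewrite rng_vid.
    rewrite comp_vid_r. apply pre_refl.
  - intros m l Hm [g [Hg [Hs Hp]]]. exists g. repeat split; auto. eapply pre_trans; eauto.
  - intros l m [g1 [Hg1 [Hs1 Hp1]]] [g2 [Hg2 [Hs2 Hp2]]].
    destruct (f_dir _ HX _ _ Hg1 Hg2) as [n [Hn [A B]]].
    exists (comp a n). assert (src a = rng n) by (rewrite (pre_rng _ _ A); auto).
    split; [exists n; repeat split; auto; apply pre_refl|].
    split; eapply pre_trans; eauto; apply pre_lmul; auto. Qed.

Lemma pdot_mem X a : X (vid (src a)) -> pdot a X a.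
Proof. intro Hv. exists (vid (src a)). split; auto. split. now rewrite rng_vid.
  rewrite comp_vid_r. apply pre_refl. Qed.

End PGL.
Section PGL2.
Context {W : WQLO} (L : PGraph W).
Local Notation pre := (preceq L).
Local Notation M := (Mor L).
Local Notation pdot := (pdot L).
Local Notation pshift := (pshift L).

Lemma shift_dot X (HX : is_filter L X) a : X (vid (src a)) ->
  forall mu, pshift (pdot a X) (deg a) mu <-> X mu.
Proof. intros Hv mu. pose proof (pdot_filter L X HX a Hv) as FD. split.
  - intros [l [Hl [Dl [Hs Hc]]]].
    assert (E : l = a) by (eapply (f_same_deg L _ FD); eauto; apply pdot_mem; auto).
    subst l. destruct Hc as [g [Hg [Hs' Hp]]].
    apply pre_lcancel in Hp; auto. exact (f_her L X HX _ _ Hp Hg).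
  - intro Hmu. assert (Hr : rng mu = src a) by exact (f_rng L X HX _ _ Hv Hmu).
    exists a. split; [apply pdot_mem; auto|]. split; [reflexivity|].
    split; [congruence|]. exists mu. split; auto. split; [congruence|]. apply pre_refl.
Qed.

Lemma dot_shift Y (HY : is_filter L Y) n : Y n ->
  forall z, pdot n (pshift Y (deg n)) z <-> Y z.
Proof. intros Hn z. split.
  - intros [g [[l [Hl [Dl [Hs Hc]]]] [Hs' Hp]]].
    assert (l = n) by (eapply f_same_deg; eauto). subst l.
    eapply f_her; eauto.
  - intro Hz. destruct (f_dir L Y HY _ _ Hz Hn) as [k [Hk [A [g [Hs E]]]]].
    subst k. exists g. split; [|split; auto].
    exists n. repeat split; auto. Qed.

Lemma shift_filter Y (HY : is_filter L Y) n : Y n -> is_filter L (pshift Y (deg n)).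
Proof. intro Hn. split; [|split].
  - exists (vid (src n)). exists n. repeat split; auto. now rewrite rng_vid.
    now rewrite comp_vid_r.
  - intros m l [k [Hs E]] [l0 [Hl0 [D0 [Hs0 Hc0]]]]. subst l.
    rewrite rng_comp in Hs0; auto.
    exists l0. repeat split; auto. eapply f_her; eauto. apply pre_lmul; auto.
    now exists k.
  - intros m1 m2 [l1 [Hl1 [D1 [Hs1 Hc1]]]] [l2 [Hl2 [D2 [Hs2 Hc2]]]].
    assert (l1 = n) by (eapply f_same_deg; eauto).
    assert (l2 = n) by (eapply f_same_deg; eauto). subst l1 l2.
    destruct (f_dir L Y HY _ _ Hc1 Hc2) as [k [Hk [A B]]].
    assert (Hnk : pre n k) by (eapply pre_trans; [apply pre_comp; eauto| eauto]).
    destruct Hnk as [nu [Hsn E]]. subst k.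
    exists nu. split; [exists n; repeat split; auto|].
    split; eapply pre_lcancel; eauto. Qed.

Lemma shift_vid Y n : Y n -> pshift Y (deg n) (vid (src n)).
Proof. intro Hn. exists n. repeat split; auto. now rewrite rng_vid. now rewrite comp_vid_r. Qed.

Lemma dot_assoc a g X : src a = rng g ->
  forall z, pdot a (pdot g X) z <-> pdot (comp a g) X z.
Proof. intros H z. split.
  - intros [h [[k [Hk [Hs Hp]]] [Hs' Hp']]].
    exists k. split; auto. split. rewrite src_comp; auto.
    eapply pre_trans; eauto. rewrite <- comp_assoc; auto. apply pre_lmul; auto.
  - intros [k [Hk [Hs Hp]]]. rewrite src_comp in Hs; auto.
    exists (comp g k). split. exists k. repeat split; auto. apply pre_refl.
    split. rewrite rng_comp; auto. rewrite comp_assoc; auto. Qed.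

Lemma dot_vid X (HX : is_filter L X) v : X (vid v) -> forall z, pdot (vid v) X z <-> X z.
Proof. intros Hv z. split.
  - intros [g [Hg [Hs Hp]]]. rewrite src_vid in Hs.
    rewrite Hs, comp_vid_l in Hp. eapply f_her; eauto.
  - intro Hz. exists z. split; auto. assert (rng z = v) by (eapply f_rng; eauto).
    rewrite src_vid. split; auto. subst v. rewrite comp_vid_l. apply pre_refl. Qed.

Lemma dot_ext a X Y : (forall z, X z <-> Y z) -> forall z, pdot a X z <-> pdot a Y z.
Proof. intros E z. split; intros [g [Hg R]]; exists g; split; auto; apply E; auto. Qed.
Lemma shift_ext m X Y : (forall z, X z <-> Y z) -> forall z, pshift X m z <-> pshift Y m z.
Proof. intros E z. split; intros [g [Hg [D [S Hc]]]]; exists g; repeat split; auto; apply E; auto. Qed.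

Lemma meet X Y (HX : is_filter L X) (HY : is_filter L Y) b c :
  X (vid (src b)) -> Y (vid (src c)) -> (forall z, pdot b X z <-> pdot c Y z) ->
  exists Z xi eta, is_filter L Z /\ Z (vid (src xi)) /\ Z (vid (src eta)) /\
    src b = rng xi /\ src c = rng eta /\
    (forall z, X z <-> pdot xi Z z) /\ (forall z, Y z <-> pdot eta Z z) /\
    comp b xi = comp c eta.
Proof. intros Hb Hc E.
  set (w := pdot b X).
  assert (Fw : is_filter L w) by (apply pdot_filter; auto).
  assert (Bw : w b) by (apply pdot_mem; auto).
  assert (Cw : w c) by (apply E; apply pdot_mem; auto).
  destruct (f_dir L w Fw _ _ Bw Cw) as [n [Hn [[xi [Hxi Exi]] [eta [Heta Eeta]]]]].
  set (Z := pshift w (deg n)).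
  assert (FZ : is_filter L Z) by (apply shift_filter; auto).
  assert (ZV : Z (vid (src n))) by (apply shift_vid; auto).
  assert (Sxi : src n = src xi) by (rewrite Exi; apply src_comp; auto).
  assert (Seta : src n = src eta) by (rewrite Eeta; apply src_comp; auto).
  (* general: x = shift w (deg b) = dot xi Z *)
  assert (Gen : forall (a k : M) (V : M -> Prop), is_filter L V -> V (vid (src a)) ->
            (forall z, pdot a V z <-> w z) -> src a = rng k -> n = comp a k ->
            forall z, V z <-> pdot k Z z).
  { intros a k V FV HV EV Sk En z.
    assert (Snk : src n = src k) by (rewrite En; apply src_comp; auto).
    assert (Fk : is_filter L (pdot k Z)) by (apply pdot_filter; auto; congruence).
    assert (Fk2 : pdot k Z (vid (src a))).
    { rewrite Sk. eapply f_her; [exact Fk| apply vid_pre | apply pdot_mem; auto; congruence]. }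
    rewrite <- (shift_dot V FV a HV z).
    rewrite <- (shift_dot _ Fk a Fk2 z).
    apply shift_ext. intro u. rewrite EV. rewrite dot_assoc; auto. rewrite <- En.
    symmetry. apply dot_shift; auto. }
  exists Z, xi, eta.
  split; [exact FZ|]. split; [rewrite <- Sxi; exact ZV|]. split; [rewrite <- Seta; exact ZV|].
  split; [exact Hxi|]. split; [exact Heta|].
  split; [apply (Gen b xi X HX Hb); auto; intro; tauto|].
  split; [apply (Gen c eta Y HY Hc); auto; intro u; rewrite <- E; tauto|].
  congruence.
Qed.
End PGL2.
Lemma pred_ext {A : Type} (P Q : A -> Prop) : (forall z, P z <-> Q z) -> P = Q.
Proof. intro H. apply functional_extensionality. intro z. apply propositional_extensionality. apply H. Qed.

Lemma g_mid {G : Group} (a b g : G) : qmul (qmul a g) (qinv (qmul b g)) = qmul a (qinv b).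
Proof. rewrite g_inv_mul. rewrite <- qmul_assoc, (qmul_assoc _ g), qmul_Vr, qmul_1l. reflexivity. Qed.

Section Main.
Context {W : WQLO} (L : PGraph W).
Local Notation pre := (preceq L).
Local Notation M := (Mor L).
Local Notation pdot := (pdot L).
Local Notation pshift := (pshift L).

Lemma filt_ext (x y : Filt L) : (forall z, proj1_sig x z <-> proj1_sig y z) -> x = y.
Proof. intro H. destruct x as [x hx], y as [y hy]. simpl in H.
  apply pred_ext in H. subst y. f_equal. apply proof_irrelevance. Qed.

Definition compG (g : GPath L) : ((M -> Prop) * W * (M -> Prop)) :=
  (proj1_sig (gp_x L g), gp_q L g, proj1_sig (gp_y L g)).

Lemma GPath_ext (g h : GPath L) : compG g = compG h -> g = h.
Proof. destruct g as [[[x q] y] hg], h as [[[x' q'] y'] hh]. unfold compG, gp_x, gp_y, gp_q; simpl.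
  intro E. inversion E.
  assert (x = x') by (apply filt_ext; intro; rewrite H0; tauto).
  assert (y = y') by (apply filt_ext; intro; rewrite H2; tauto).
  subst. f_equal. apply proof_irrelevance. Qed.

Definition img (t : Triple L) : ((M -> Prop) * W * (M -> Prop)) :=
  let '(a, b, x) := t in (pdot a (proj1_sig x), qmul (deg a) (qinv (deg b)), pdot b (proj1_sig x)).

Definition dotF (a : M) (x : Filt L) (H : rfilt L x (src a)) : Filt L :=
  exist _ (pdot a (proj1_sig x)) (pdot_filter L _ (proj2_sig x) a H).

Definition rfb (a b : M) (x : Filt L) (H1 : src a = src b) (H2 : rfilt L x (src a)) : rfilt L x (src b) :=
  eq_ind (src a) (fun v => rfilt L x v) H2 (src b) H1.

Lemma mkG_inG a b x (H1 : src a = src b) (H2 : rfilt L x (src a)) :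
  inG L (dotF a x H2, qmul (deg a) (qinv (deg b)), dotF b x (rfb a b x H1 H2)).
Proof. exists (deg a), (deg b). split; [apply deg_P|]. split; [apply deg_P|]. split; auto.
  split; [exists a; split; auto; apply pdot_mem; auto|].
  split; [exists b; split; auto; apply pdot_mem; apply (rfb a b x H1 H2)|].
  intro mu. unfold same, shift. simpl.
  change (pshift (pdot a (proj1_sig x)) (deg a) mu <-> pshift (pdot b (proj1_sig x)) (deg b) mu).
  rewrite shift_dot, shift_dot; try tauto; try apply (proj2_sig x); auto.
  apply (rfb a b x H1 H2). Qed.

Definition mkG a b x (H1 : src a = src b) (H2 : rfilt L x (src a)) : GPath L :=
  exist _ _ (mkG_inG a b x H1 H2).

Lemma compG_mkG a b x H1 H2 : compG (mkG a b x H1 H2) = img (a, b, x).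
Proof. reflexivity. Qed.

Lemma valid1 (t : Triple L) : valid L t -> src (fst (fst t)) = src (snd (fst t)).
Proof. destruct t as [[a b] x]. simpl. tauto. Qed.
Lemma valid2 (t : Triple L) : valid L t -> rfilt L (snd t) (src (fst (fst t))).
Proof. destruct t as [[a b] x]. simpl. tauto. Qed.

Definition Phi (C : SpiG L) : GPath L :=
  let s := constructive_indefinite_description _ (proj2_sig C) in
  mkG _ _ _ (valid1 _ (proj1 (proj2_sig s))) (valid2 _ (proj1 (proj2_sig s))).

Lemma Phi_rep (C : SpiG L) : exists t, valid L t /\ compG (Phi C) = img t /\
  forall u, proj1_sig C u <-> (valid L u /\ spi_rel L t u).
Proof. unfold Phi. destruct (constructive_indefinite_description _ _) as [t [Hv Hc]].
  exists t. simpl. split; auto. split; auto. rewrite compG_mkG. destruct t as [[a b] x]. reflexivity. Qed.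

Lemma rel_img (t t' : Triple L) : valid L t -> valid L t' -> (spi_rel L t t' <-> img t = img t').
Proof. destruct t as [[a b] x], t' as [[a' b'] x']. simpl.
  intros [Sab Rx] [Sab' Rx']. split.
  - intros [y [g [g' [Ry [Ry' [S1 [S2 [S3 [S4 [Ex [Ex' [Ea Eb]]]]]]]]]]]].
    assert (Ex2 : forall z, proj1_sig x z <-> pdot g (proj1_sig y) z) by exact Ex.
    assert (Ex2' : forall z, proj1_sig x' z <-> pdot g' (proj1_sig y) z) by exact Ex'.
    f_equal; [f_equal|].
    + apply pred_ext. intro z.
      rewrite (dot_ext L a _ _ Ex2 z), (dot_ext L a' _ _ Ex2' z), !dot_assoc, Ea; auto. tauto.
    + rewrite <- (g_mid (deg a) (deg b) (deg g)), <- (g_mid (deg a') (deg b') (deg g')).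
      rewrite <- !deg_comp; auto. rewrite Ea, Eb. reflexivity.
    + apply pred_ext. intro z.
      rewrite (dot_ext L b _ _ Ex2 z), (dot_ext L b' _ _ Ex2' z), !dot_assoc, Eb; auto. tauto.
  - intro E. inversion E as [[E1 E2 E3]].
    assert (E1' : forall z, pdot a (proj1_sig x) z <-> pdot a' (proj1_sig x') z) by (rewrite E1; tauto).
    destruct (meet L _ _ (proj2_sig x) (proj2_sig x') a a' Rx Rx' E1')
      as [Z [xi [eta [FZ [Z1 [Z2 [S1 [S2 [Ex [Ex' Ec]]]]]]]]]].
    exists (exist _ Z FZ), xi, eta. unfold rfilt; simpl.
    split; auto. split; auto. split; auto. split; [congruence|]. split; auto. split; [congruence|].
    split; [exact Ex|]. split; [exact Ex'|]. split; auto.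
    assert (Fb : is_filter L (pdot b (proj1_sig x))) by (apply pdot_filter; [apply (proj2_sig x)|rewrite <- Sab; exact Rx]).
    apply (f_same_deg L _ Fb).
    + exists xi. split; [apply Ex; apply pdot_mem; auto|]. split; [congruence|apply pre_refl].
    + rewrite E3. exists eta. split; [apply Ex'; apply pdot_mem; auto|]. split; [congruence|apply pre_refl].
    + rewrite !deg_comp; try congruence. eapply g_key; eauto.
      rewrite <- !deg_comp; auto. congruence.
Qed.

Lemma rel_refl t : valid L t -> spi_rel L t t.
Proof. intro H. apply rel_img; auto. Qed.

Lemma class_spec (C : SpiG L) : forall u, proj1_sig C u <-> (valid L u /\ img u = compG (Phi C)).
Proof. destruct (Phi_rep C) as [t [Hv [E Hc]]]. intro u. rewrite Hc, E.
  split; intros [Hu R]; split; auto; [symmetry|]; apply rel_img; auto. Qed.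

Lemma class_img (C : SpiG L) t : proj1_sig C t -> compG (Phi C) = img t.
Proof. intro H. apply class_spec in H. symmetry. tauto. Qed.

Lemma class_valid (C : SpiG L) t : proj1_sig C t -> valid L t.
Proof. intro H. apply class_spec in H. tauto. Qed.

Lemma class_ex (C : SpiG L) : exists t, proj1_sig C t.
Proof. destruct (Phi_rep C) as [t [Hv [E Hc]]]. exists t. apply Hc. split; auto. apply rel_refl; auto. Qed.

Definition mkC (t : Triple L) (H : valid L t) : SpiG L :=
  exist _ (fun u => valid L u /\ spi_rel L t u) (ex_intro _ t (conj H (fun u => iff_refl _))).

Lemma mkC_mem t H : proj1_sig (mkC t H) t.
Proof. simpl. split; auto. apply rel_refl; auto. Qed.

Lemma class_exists t : valid L t -> exists C : SpiG L, proj1_sig C t.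
Proof. intro H. exists (mkC t H). apply mkC_mem. Qed.

Lemma Phi_inj (C C' : SpiG L) : compG (Phi C) = compG (Phi C') -> C = C'.
Proof. intro E. destruct C as [C hC], C' as [C' hC'].
  assert (C = C').
  { apply pred_ext. intro u. pose proof (class_spec (exist _ C hC) u) as A.
    pose proof (class_spec (exist _ C' hC') u) as B. simpl in A, B. rewrite A, B, E. tauto. }
  subst. f_equal. apply proof_irrelevance. Qed.

Lemma Phi_surj (g : GPath L) : exists C, Phi C = g.
Proof. destruct g as [[[x q] y] hg] eqn:Eg.
  destruct hg as [m [n [Pm [Pn [Eq [[al [Hal Dal]] [[be [Hbe Dbe]] Esh]]]]]]].
  set (w := pshift (proj1_sig x) m).
  assert (Fw : is_filter L w) by (subst w; rewrite <- Dal; apply shift_filter; auto; apply (proj2_sig x)).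
  set (wF := exist _ w Fw : Filt L).
  assert (V1 : w (vid (src al))) by (subst w; rewrite <- Dal; apply shift_vid; auto).
  assert (V2 : w (vid (src be))) by (apply Esh; rewrite <- Dbe; apply shift_vid; auto).
  assert (Va : valid L (al, be, wF)).
  { simpl. split; auto. eapply f_vert_uniq; eauto. }
  destruct (class_exists _ Va) as [C HC]. exists C.
  rewrite <- Eg. apply GPath_ext. rewrite (class_img _ _ HC). rewrite Eg. simpl.
  unfold compG, gp_x, gp_y, gp_q. simpl. f_equal; [f_equal|].
  - apply pred_ext. intro z. subst w. rewrite <- Dal. apply dot_shift; auto. apply (proj2_sig x).
  - congruence.
  - apply pred_ext. intro z. rewrite (dot_ext L be _ (pshift (proj1_sig y) n)).
    rewrite <- Dbe. apply dot_shift; auto. apply (proj2_sig y). apply Esh.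
Qed.
End Main.
Lemma g_prod {G : Group} (a b c d xi eta : G) : qmul b xi = qmul c eta ->
  qmul (qmul a xi) (qinv (qmul d eta)) = qmul (qmul a (qinv b)) (qmul c (qinv d)).
Proof. intro H.
  assert (Hx : xi = qmul (qinv b) (qmul c eta)).
  { apply (g_lcancel b). rewrite H, qmul_assoc, qmul_Vr, qmul_1l. reflexivity. }
  subst xi. rewrite g_inv_mul.
  rewrite <- !qmul_assoc. rewrite (qmul_assoc _ eta (qinv eta)), qmul_Vr, qmul_1l. reflexivity. Qed.

Lemma g_inv_frac {G : Group} (a b : G) : qinv (qmul a (qinv b)) = qmul b (qinv a).
Proof. rewrite g_inv_mul, g_inv_inv. reflexivity. Qed.

Section Main2.
Context {W : WQLO} (L : PGraph W).
Local Notation pre := (preceq L).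
Local Notation M := (Mor L).
Local Notation pdot := (pdot L).
Local Notation pshift := (pshift L).
Local Notation Phi := (Phi L).
Local Notation compG := (compG L).
Local Notation img := (img L).

Lemma compG_comp (g : GPath L) a b x : compG g = img (a, b, x) ->
  proj1_sig (gp_x L g) = pdot a (proj1_sig x) /\ gp_q L g = qmul (deg a) (qinv (deg b)) /\
  proj1_sig (gp_y L g) = pdot b (proj1_sig x).
Proof. unfold compG; simpl. intro E. inversion E. auto. Qed.

Lemma proj_compG (g : GPath L) x q y : proj1_sig g = (x, q, y) <-> compG g = (proj1_sig x, q, proj1_sig y).
Proof. destruct g as [[[x0 q0] y0] h]. unfold compG, gp_x, gp_y, gp_q; simpl. split.
  - intro E. inversion E. reflexivity.
  - intro E. inversion E. f_equal; [f_equal|]; auto; apply filt_ext; intro z; rewrite ?H0, ?H2; tauto. Qed.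

Lemma Phi_composable (A B : SpiG L) : spi_composable L A B <-> gp_y L (Phi A) = gp_x L (Phi B).
Proof. split.
  - intros [a [b [x [c [d [y [HA [HB E]]]]]]]].
    destruct (compG_comp _ _ _ _ (class_img L _ _ HA)) as [_ [_ E1]].
    destruct (compG_comp _ _ _ _ (class_img L _ _ HB)) as [E2 [_ _]].
    apply filt_ext. intro z. rewrite E1, E2. apply E.
  - intro E. destruct (class_ex L A) as [[[a b] x] HA]. destruct (class_ex L B) as [[[c d] y] HB].
    destruct (compG_comp _ _ _ _ (class_img L _ _ HA)) as [_ [_ E1]].
    destruct (compG_comp _ _ _ _ (class_img L _ _ HB)) as [E2 [_ _]].
    exists a, b, x, c, d, y. split; auto. split; auto. intro z. unfold dot.
    change (pdot b (proj1_sig x) z <-> pdot c (proj1_sig y) z).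
    rewrite <- E1, <- E2, E. tauto. Qed.

Lemma prod_img a b (x : Filt L) c d (y z : Filt L) xi eta :
  src a = rng xi -> src b = rng xi -> src c = rng eta -> src d = rng eta ->
  (forall u, proj1_sig x u <-> pdot xi (proj1_sig z) u) ->
  (forall u, proj1_sig y u <-> pdot eta (proj1_sig z) u) ->
  comp b xi = comp c eta ->
  img (comp a xi, comp d eta, z) =
  (pdot a (proj1_sig x), qmul (qmul (deg a) (qinv (deg b))) (qmul (deg c) (qinv (deg d))),
   pdot d (proj1_sig y)).
Proof. intros S1 S2 S3 S4 Ex Ey Ec. simpl. f_equal; [f_equal|].
  - apply pred_ext. intro u. rewrite (dot_ext L a _ _ Ex u), dot_assoc; auto. tauto.
  - rewrite !deg_comp; auto. apply g_prod. rewrite <- !deg_comp; auto. congruence.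
  - apply pred_ext. intro u. rewrite (dot_ext L d _ _ Ey u), dot_assoc; auto. tauto.
Qed.

Lemma Phi_prod (A B C : SpiG L) : spi_prod L A B C <->
  (gp_y L (Phi A) = gp_x L (Phi B) /\
   proj1_sig (Phi C) = (gp_x L (Phi A), qmul (gp_q L (Phi A)) (gp_q L (Phi B)), gp_y L (Phi B))).
Proof. rewrite proj_compG. split.
  - intros [a [b [x [c [d [y [z [xi [eta [HA [HB [E [Rz1 [Rz2 [S1 [S2 [S3 [S4 [Ex [Ey [Ec HC]]]]]]]]]]]]]]]]]]]]].
    split. apply Phi_composable. exists a, b, x, c, d, y. auto.
    destruct (compG_comp _ _ _ _ (class_img L _ _ HA)) as [A1 [A2 A3]].
    destruct (compG_comp _ _ _ _ (class_img L _ _ HB)) as [B1 [B2 B3]].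
    rewrite (class_img L _ _ HC). rewrite A1, A2, B2, B3. apply prod_img; auto.
  - intros [E EC]. destruct (class_ex L A) as [[[a b] x] HA]. destruct (class_ex L B) as [[[c d] y] HB].
    destruct (compG_comp _ _ _ _ (class_img L _ _ HA)) as [A1 [A2 A3]].
    destruct (compG_comp _ _ _ _ (class_img L _ _ HB)) as [B1 [B2 B3]].
    destruct (class_valid L _ _ HA) as [Va Rx]. destruct (class_valid L _ _ HB) as [Vb Ry].
    assert (E' : forall u, pdot b (proj1_sig x) u <-> pdot c (proj1_sig y) u).
    { intro u. rewrite <- A3, <- B1, E. tauto. }
    destruct (meet L _ _ (proj2_sig x) (proj2_sig y) b c ltac:(rewrite <- Va; exact Rx) Ry E')
      as [Z [xi [eta [FZ [Z1 [Z2 [S1 [S2 [Ex [Ey Ec]]]]]]]]]].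
    set (zF := exist _ Z FZ : Filt L).
    assert (HC : proj1_sig C (comp a xi, comp d eta, zF)).
    { apply class_spec. split.
      - simpl. rewrite !src_comp; try congruence. split.
        + eapply f_vert_uniq; [exact FZ| exact Z1| exact Z2].
        + exact Z1.
      - rewrite EC, A1, A2, B2, B3. apply (prod_img a b x c d y zF xi eta); auto; congruence. }
    exists a, b, x, c, d, y, zF, xi, eta.
    split; [exact HA|]. split; [exact HB|]. split; [intro u; unfold dot; change (pdot b (proj1_sig x) u <-> pdot c (proj1_sig y) u); rewrite <- A3, <- B1, E; tauto|].
    split; [exact Z1|]. split; [exact Z2|]. split; [congruence|]. split; auto. split; auto.
    split; [congruence|]. split; [exact Ex|]. split; [exact Ey|]. split; auto.
Qed.

Lemma Phi_inv (A B : SpiG L) : spi_inv L A B <->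
  proj1_sig (Phi B) = (gp_y L (Phi A), qinv (gp_q L (Phi A)), gp_x L (Phi A)).
Proof. rewrite proj_compG. split.
  - intros [a [b [x [HA HB]]]].
    destruct (compG_comp _ _ _ _ (class_img L _ _ HA)) as [A1 [A2 A3]].
    rewrite (class_img L _ _ HB), A1, A2, A3, g_inv_frac. reflexivity.
  - intro E. destruct (class_ex L A) as [[[a b] x] HA].
    destruct (compG_comp _ _ _ _ (class_img L _ _ HA)) as [A1 [A2 A3]].
    destruct (class_valid L _ _ HA) as [Va Rx].
    exists a, b, x. split; auto. apply class_spec. split.
    + simpl. split; auto. rewrite <- Va; exact Rx.
    + rewrite E, A1, A2, A3, g_inv_frac. reflexivity.
Qed.
End Main2.
Section Topo.
Context {W : WQLO} (L : PGraph W) (FA : finitely_aligned L).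
Local Notation pre := (preceq L).
Local Notation M := (Mor L).
Local Notation pdot := (pdot L).
Local Notation pshift := (pshift L).
Local Notation Phi := (Phi L).
Local Notation compG := (compG L).
Local Notation img := (img L).

Definition cnb (w : Filt L) (P : Filt L -> Prop) : Prop :=
  exists A B, cyl L A B w /\ forall x, cyl L A B x -> P x.

Lemma cnb_mono w (P Q : Filt L -> Prop) : cnb w P -> (forall x, P x -> Q x) -> cnb w Q.
Proof. intros [A [B [H1 H2]]] H. exists A, B. split; auto. Qed.

Lemma cyl_app A1 B1 A2 B2 x : cyl L (A1 ++ A2) (B1 ++ B2) x <-> cyl L A1 B1 x /\ cyl L A2 B2 x.
Proof. unfold cyl. split.
  - intros [H1 H2]. repeat split; intros; [apply H1|apply H2|apply H1|apply H2];
    auto; apply in_or_app; auto.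
  - intros [[H1 H2] [H3 H4]]. split; intros a Ha; apply in_app_or in Ha; destruct Ha; auto. Qed.

Lemma cnb_and w P Q : cnb w P -> cnb w Q -> cnb w (fun x => P x /\ Q x).
Proof. intros [A1 [B1 [H1 H2]]] [A2 [B2 [H3 H4]]]. exists (A1 ++ A2), (B1 ++ B2).
  split. apply cyl_app; auto. intros x Hx. apply cyl_app in Hx. destruct Hx. auto. Qed.

Lemma cnb_all {T : Type} w (l : list T) (P : T -> Filt L -> Prop) :
  (forall a, In a l -> cnb w (P a)) -> cnb w (fun x => forall a, In a l -> P a x).
Proof. induction l as [|a l IH]; intro H.
  - exists [], []. split. split; intros _ []. intros x _ a [].
  - eapply cnb_mono. apply cnb_and. apply (H a (or_introl eq_refl)). apply IH.
    intros b Hb. apply H. now right.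
    intros x [H1 H2] b [<-|Hb]; auto. Qed.

Lemma cnb_mem (w : Filt L) a : proj1_sig w a -> cnb w (fun x => proj1_sig x a).
Proof. intro H. exists [a], []. split. split; [intros b [<-|[]]; auto| intros _ []].
  intros x [H1 _]. apply H1. now left. Qed.

Lemma cnb_nmem (w : Filt L) a : ~ proj1_sig w a -> cnb w (fun x => ~ proj1_sig x a).
Proof. intro H. exists [], [a]. split. split; [intros _ []| intros b [<-|[]]; auto].
  intros x [_ H1]. apply H1. now left. Qed.

Lemma cnb_dot_in (w : Filt L) al z : pdot al (proj1_sig w) z -> cnb w (fun x => pdot al (proj1_sig x) z).
Proof. intros [g [Hg R]]. eapply cnb_mono. apply (cnb_mem w g Hg). intros x Hx. exists g. auto. Qed.

Lemma cnb_dot_out (w : Filt L) al b : ~ pdot al (proj1_sig w) b ->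
  cnb w (fun x => rfilt L x (src al) -> ~ pdot al (proj1_sig x) b).
Proof. intro Hn. destruct (FA al b) as [J HJ].
  assert (Hk : forall k, In k J -> cnb w (fun x => forall mu, src al = rng mu -> k = comp al mu -> ~ proj1_sig x mu)).
  { intros k Hk. assert (Hp : pre al k /\ pre b k) by (apply HJ; exists k; split; auto; apply pre_refl).
    destruct Hp as [[mu [Smu Emu]] Hbk].
    eapply cnb_mono. apply (cnb_nmem w mu).
    - intro Hw. apply Hn. exists mu. split; auto. split; auto. congruence.
    - intros x Hx mu' S' E'. assert (mu' = mu) by (eapply lcancel; eauto; congruence). congruence. }
  eapply cnb_mono. apply (cnb_all w J _ Hk).
  intros x Hx Rx [g [Hg [Sg Hbg]]].
  destruct (proj1 (HJ (comp al g))) as [k [Hk' Hkg]]. split; auto. apply pre_comp; auto.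
  assert (Hak : pre al k) by (apply HJ; exists k; split; auto; apply pre_refl).
  destruct Hak as [mu [Smu Emu]]. subst k. apply pre_lcancel in Hkg; auto.
  eapply (Hx _ Hk' mu); eauto. eapply f_her; eauto. apply (proj2_sig x). Qed.

Lemma cnb_dotc (w : Filt L) al A B :
  (forall a, In a A -> pdot al (proj1_sig w) a) -> (forall b, In b B -> ~ pdot al (proj1_sig w) b) ->
  cnb w (fun x => rfilt L x (src al) -> (forall a, In a A -> pdot al (proj1_sig x) a) /\
                                        (forall b, In b B -> ~ pdot al (proj1_sig x) b)).
Proof. intros HA HB. eapply cnb_mono. apply cnb_and.
  apply (cnb_all w A (fun a x => pdot al (proj1_sig x) a)). intros a Ha. apply cnb_dot_in; auto.
  apply (cnb_all w B (fun b x => rfilt L x (src al) -> ~ pdot al (proj1_sig x) b)). intros b Hb. apply cnb_dot_out; auto.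
  intros x [H1 H2] Rx. split; [auto| intros b Hb; apply H2; auto]. Qed.

Lemma upper (X : M -> Prop) (HX : is_filter L X) (A : list M) :
  (forall a, In a A -> X a) -> exists n, X n /\ forall a, In a A -> pre a n.
Proof. induction A as [|a A IH]; intro H.
  - destruct (f_ne L X HX) as [l Hl]. exists l. split; auto. intros _ [].
  - destruct IH as [n [Hn Hall]]. intros; apply H; now right.
    destruct (f_dir L X HX a n) as [k [Hk [A1 A2]]]; auto. apply H; now left.
    exists k. split; auto. intros b [<-|Hb]; auto. eapply pre_trans; eauto. Qed.

Lemma make_bs (n : M) (Bl : list M) : exists bs,
  (forall k, In k bs -> pre n k /\ exists b, In b Bl /\ pre b k) /\
  (forall b, In b Bl -> forall l, pre n l -> pre b l -> exists k, In k bs /\ pre k l).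
Proof. induction Bl as [|b Bl IH].
  - exists []. split. intros _ []. intros _ [].
  - destruct IH as [bs [H1 H2]]. destruct (FA n b) as [J HJ].
    exists (J ++ bs). split.
    + intros k Hk. apply in_app_or in Hk. destruct Hk as [Hk|Hk].
      * assert (pre n k /\ pre b k) by (apply HJ; exists k; split; auto; apply pre_refl).
        split; [tauto|]. exists b. split; [now left|tauto].
      * destruct (H1 k Hk) as [Hnk [b' [Hb' Hb'k]]]. split; auto. exists b'. split; auto. now right.
    + intros b' [<-|Hb'] l Hnl Hbl.
      * destruct (proj1 (HJ l) (conj Hnl Hbl)) as [k [Hk Hkl]]. exists k. split; auto. apply in_or_app; auto.
      * destruct (H2 b' Hb' l Hnl Hbl) as [k [Hk Hkl]]. exists k. split; auto. apply in_or_app; auto. Qed.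

Lemma cnb_tau (w : Filt L) P : cnb w P -> exists B, tau_basic L B /\ B w /\ forall x, B x -> P x.
Proof. intros [A [Bl [[HA HB] HP]]].
  destruct (upper _ (proj2_sig w) A HA) as [n [Hn Hall]].
  destruct (make_bs n Bl) as [bs [Hbs1 Hbs2]].
  set (B := fun x : Filt L => exists g, proj1_sig x g /\ forall z, proj1_sig x z -> pre g z ->
              (pre n z /\ forall b, In b bs -> ~ pre b z)).
  assert (Wb : forall k, In k bs -> ~ proj1_sig w k).
  { intros k Hk Hw. destruct (Hbs1 k Hk) as [_ [b [Hb Hbk]]]. apply (HB b Hb).
    eapply f_her; eauto. apply (proj2_sig w). }
  exists B. split; [|split].
  - exists n, bs. split; [|intro; reflexivity].
    intros k Hk. split. apply Hbs1; auto. intro E. subst k. apply (Wb n Hk Hn).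
  - exists n. split; auto. intros z Hz Hnz. split; auto. intros k Hk Hkz. apply (Wb k Hk).
    eapply f_her; eauto. apply (proj2_sig w).
  - intros x [g [Hg Hc]]. apply HP. destruct (Hc g Hg (pre_refl L g)) as [Hng _].
    assert (Hxn : proj1_sig x n) by (eapply f_her; eauto; apply (proj2_sig x)).
    split.
    + intros a Ha. eapply f_her; eauto. apply (proj2_sig x).
    + intros b Hb Hxb. destruct (f_dir L _ (proj2_sig x) g b Hg Hxb) as [z [Hz [Hgz Hbz]]].
      destruct (Hc z Hz Hgz) as [Hnz Hno].
      destruct (Hbs2 b Hb z Hnz Hbz) as [k [Hk Hkz]]. apply (Hno k Hk Hkz). Qed.

Lemma tau_in (B : Filt L -> Prop) a0 bs :
  (forall x, B x <-> exists g, proj1_sig x g /\ forall z, proj1_sig x z -> pre g z ->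
       (pre a0 z /\ forall b, In b bs -> ~ pre b z)) ->
  forall x g, proj1_sig x g -> pre a0 g -> (forall b, In b bs -> ~ proj1_sig x b) -> B x.
Proof. intros HB x g Hg Hag Hbs. apply HB. exists g. split; auto. intros z Hz Hgz. split.
  eapply pre_trans; eauto. intros b Hb Hbz. apply (Hbs b Hb). eapply f_her; eauto. apply (proj2_sig x). Qed.

Lemma tau_out (B : Filt L -> Prop) a0 bs :
  (forall x, B x <-> exists g, proj1_sig x g /\ forall z, proj1_sig x z -> pre g z ->
       (pre a0 z /\ forall b, In b bs -> ~ pre b z)) ->
  forall w, B w -> exists g, proj1_sig w g /\ pre a0 g /\ forall b, In b bs -> ~ proj1_sig w b.
Proof. intros HB w Hw. apply HB in Hw. destruct Hw as [g [Hg Hc]]. exists g. split; auto.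
  split. apply (Hc g Hg (pre_refl L g)).
  intros b Hb Hwb. destruct (f_dir L _ (proj2_sig w) g b Hg Hwb) as [z [Hz [Hgz Hbz]]].
  destruct (Hc z Hz Hgz) as [_ Hno]. apply (Hno b Hb Hbz). Qed.

End Topo.
Section Topo2.
Context {W : WQLO} (L : PGraph W) (FA : finitely_aligned L).
Local Notation pre := (preceq L).
Local Notation M := (Mor L).
Local Notation pdot := (pdot L).
Local Notation pshift := (pshift L).
Local Notation Phi := (Phi L).
Local Notation compG := (compG L).
Local Notation img := (img L).

Lemma Phi_open_fwd (V : GPath L -> Prop) : GPath_open L V -> SpiG_open L (fun C => V (Phi C)).
Proof. intros HV C HC.
  destruct (HV _ HC) as [m [n [U [V' [Pm [Pn [OU [OV [[Eq [[al [Hal Dal]] [[be [Hbe Dbe]] [Esh [HU HV']]]]] Hsub]]]]]]]]].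
  set (X := gp_x L (Phi C)) in *. set (Y := gp_y L (Phi C)) in *.
  set (w := pshift (proj1_sig X) m).
  assert (Fw : is_filter L w) by (subst w; rewrite <- Dal; apply shift_filter; auto; apply (proj2_sig X)).
  set (wF := exist _ w Fw : Filt L).
  assert (V1 : w (vid (src al))) by (subst w; rewrite <- Dal; apply shift_vid; auto).
  assert (V2 : w (vid (src be))) by (apply Esh; rewrite <- Dbe; apply shift_vid; auto).
  assert (Sab : src al = src be) by (eapply f_vert_uniq; eauto).
  assert (EX : forall z, pdot al w z <-> proj1_sig X z).
  { intro z. subst w. rewrite <- Dal. apply dot_shift; auto. apply (proj2_sig X). }
  assert (EY : forall z, pdot be w z <-> proj1_sig Y z).
  { intro z. rewrite (dot_ext L be _ (pshift (proj1_sig Y) n)). rewrite <- Dbe. apply dot_shift; auto.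
    apply (proj2_sig Y). apply Esh. }
  assert (HCt : proj1_sig C (al, be, wF)).
  { apply class_spec. split. simpl. split; auto. simpl. unfold compG.
    f_equal; [f_equal|]. apply pred_ext; exact EX. fold X Y. rewrite Eq. congruence.
    apply pred_ext; exact EY. }
  destruct (OU X HU) as [A1 [B1 [[HA1 HB1] HU1]]].
  destruct (OV Y HV') as [A2 [B2 [[HA2 HB2] HV1]]].
  assert (Hn : cnb L wF (fun x => (rfilt L x (src al) -> (forall a, In a A1 -> pdot al (proj1_sig x) a) /\
                                        (forall b, In b B1 -> ~ pdot al (proj1_sig x) b)) /\
                                  (rfilt L x (src be) -> (forall a, In a A2 -> pdot be (proj1_sig x) a) /\
                                        (forall b, In b B2 -> ~ pdot be (proj1_sig x) b)))).
  { apply cnb_and; apply cnb_dotc; auto; simpl.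
    - intros a Ha. apply EX. auto.
    - intros b Hb Hc. apply EX in Hc. apply (HB1 b Hb Hc).
    - intros a Ha. apply EY. auto.
    - intros b Hb Hc. apply EY in Hc. apply (HB2 b Hb Hc). }
  destruct (cnb_tau L FA wF _ Hn) as [B [TB [Bw HBP]]].
  exists al, be, B. split; auto. split. exists wF. split; auto.
  intros C' [x' [Bx' HC']]. apply Hsub.
  destruct (compG_comp L _ _ _ _ (class_img L _ _ HC')) as [X1 [Q1 Y1]].
  destruct (class_valid L _ _ HC') as [_ Rx'].
  assert (Rx2 : rfilt L x' (src be)) by (rewrite <- Sab; exact Rx').
  destruct (HBP x' Bx') as [P1 P2]. destruct (P1 Rx') as [P1a P1b]. destruct (P2 Rx2) as [P2a P2b].
  unfold Zbasic. split; [rewrite Q1, Dal, Dbe; reflexivity|].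
  split; [exists al; split; auto; rewrite X1; apply pdot_mem; auto|].
  split; [exists be; split; auto; rewrite Y1; apply pdot_mem; auto|].
  split.
  - intro mu. unfold shift.
    change (pshift (proj1_sig (gp_x L (Phi C'))) m mu <-> pshift (proj1_sig (gp_y L (Phi C'))) n mu).
    rewrite X1, Y1, <- Dal, <- Dbe, !shift_dot; try tauto; auto; apply (proj2_sig x').
  - split.
    + apply HU1. split; intros; rewrite X1; auto.
    + apply HV1. split; intros; rewrite Y1; auto.
Qed.

Lemma Phi_open_bwd (V : GPath L -> Prop) : SpiG_open L (fun C => V (Phi C)) -> GPath_open L V.
Proof. intros HV g Hg. destruct (Phi_surj L g) as [C <-].
  destruct (HV C Hg) as [al [be [B [[a0 [bs [Hbs HB]]] [[x [Bx HCx]] Hsub]]]]].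
  destruct (class_valid L _ _ HCx) as [Sab Rx].
  destruct (compG_comp L _ _ _ _ (class_img L _ _ HCx)) as [X1 [Q1 Y1]].
  set (U := fun X' : Filt L => proj1_sig X' al /\ exists x'' : Filt L,
              (forall z, proj1_sig x'' z <-> pshift (proj1_sig X') (deg al) z) /\ B x'').
  set (V' := fun Y' : Filt L => proj1_sig Y' be).
  exists (deg al), (deg be), U, V'. split; [apply deg_P|]. split; [apply deg_P|].
  split; [|split; [|split]].
  - intros X' [HX' [x'' [Ex'' Bx'']]].
    destruct (tau_out L B a0 bs HB x'' Bx'') as [g [Hg' [Hag Hno]]].
    assert (Vx : proj1_sig x'' (vid (src al))) by (apply Ex''; apply shift_vid; auto).
    assert (Rg : rng g = src al) by (eapply f_rng; [apply (proj2_sig x'')| |]; eauto).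
    assert (Rb : forall b, In b bs -> rng b = src al).
    { intros b Hb. destruct (Hbs b Hb) as [Hab _]. apply pre_rng in Hab. apply pre_rng in Hag. congruence. }
    exists [al; comp al g], (map (comp al) bs). split.
    + split.
      * intros a [<-|[<-|[]]]; auto. apply Ex'' in Hg'. destruct Hg' as [l [Hl [Dl [Sl Hc]]]].
        assert (l = al) by (eapply f_same_deg; [apply (proj2_sig X')| | |]; eauto). congruence.
      * intros b' Hb'. apply in_map_iff in Hb'. destruct Hb' as [b [<- Hb]]. intro Hc.
        apply (Hno b Hb). apply Ex''. exists al. split; [exact HX'|]. split; [reflexivity|]. split; [rewrite Rb; auto|exact Hc].
    + intros Y' [HY1 HY2].
      assert (Ya : proj1_sig Y' al) by (apply HY1; now left).
      assert (Yag : proj1_sig Y' (comp al g)) by (apply HY1; right; now left).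
      assert (Fy : is_filter L (pshift (proj1_sig Y') (deg al))) by (apply shift_filter; auto; apply (proj2_sig Y')).
      split; auto. exists (exist _ _ Fy). split; [intro; simpl; tauto|].
      apply (tau_in L B a0 bs HB _ g); auto.
      * simpl. exists al. split; [exact Ya|]. split; [reflexivity|]. split; [congruence|exact Yag].
      * intros b Hb [l [Hl [Dl [Sl Hc]]]]. simpl in *.
        assert (l = al) by (eapply f_same_deg; [apply (proj2_sig Y')| | |]; eauto). subst l.
        apply (HY2 (comp al b)). apply in_map_iff. exists b. auto. auto.
  - intros Y' HY'. exists [be], []. split. split; [intros b [<-|[]]; auto| intros _ []].
    intros y [Hy _]. apply Hy. now left.
  - unfold Zbasic. split; [exact Q1|].
    split; [exists al; split; auto; rewrite X1; apply pdot_mem; auto|].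
    split; [exists be; split; auto; rewrite Y1; apply pdot_mem; rewrite <- Sab; auto|].
    split; [|split].
    + intro mu. unfold shift.
      change (pshift (proj1_sig (gp_x L (Phi C))) (deg al) mu <-> pshift (proj1_sig (gp_y L (Phi C))) (deg be) mu).
      rewrite X1, Y1, !shift_dot; try tauto; auto; try apply (proj2_sig x). rewrite <- Sab; auto.
    + split. rewrite X1; apply pdot_mem; auto. exists x. split; auto.
      intro z. rewrite X1, shift_dot; try tauto; auto. apply (proj2_sig x).
    + unfold V'. rewrite Y1; apply pdot_mem; rewrite <- Sab; auto.
  - intros g' [Q' [[al' [Hal' Dal']] [[be' [Hbe' Dbe']] [Esh [[HX' [x'' [Ex'' Bx'']]] HY']]]]].
    destruct (Phi_surj L g') as [C' <-].
    apply (Hsub C'). exists x''. split; auto.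
    set (X' := gp_x L (Phi C')) in *. set (Y' := gp_y L (Phi C')) in *.
    assert (Vx : proj1_sig x'' (vid (src al))) by (apply Ex''; apply shift_vid; auto).
    apply class_spec. split. simpl. split; auto.
    unfold compG. fold X' Y'. simpl. f_equal; [f_equal|].
    + apply pred_ext. intro z. rewrite (dot_ext L al _ _ Ex''). apply dot_shift; auto. apply (proj2_sig X').
    + symmetry. exact Q'.
    + apply pred_ext. intro z. rewrite (dot_ext L be _ _ Ex'').
      rewrite (dot_ext L be _ (pshift (proj1_sig Y') (deg be))). apply dot_shift; auto. apply (proj2_sig Y').
      apply Esh.
Qed.
End Topo2.
Lemma sig_ext {A : Type} {P : A -> Prop} (a b : {x : A | P x}) : proj1_sig a = proj1_sig b -> a = b.
Proof. destruct a as [a ha], b as [b hb]. simpl. intro E. subst. f_equal. apply proof_irrelevance. Qed.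

Lemma red_iso (G H : TopGroupoid) (f : G -> H) (X : G -> Prop) (Y : H -> Prop) :
  TG_iso G H f -> (forall u, X u <-> Y (f u)) ->
  exists Psi, TG_iso (reduction G X) (reduction H Y) Psi.
Proof. intros [[Inj Sur] [Hc [Hp [Hi Ho]]]] HXY.
  assert (IR : forall g, in_reduction G X g <-> in_reduction H Y (f g)).
  { intro g. split.
    - intros [h [u [w [H1 [H2 [H3 [H4 H5]]]]]]]. exists (f h), (f u), (f w).
      rewrite <- Hi, <- !Hp, <- !HXY. auto.
    - intros [h' [u' [w' [H1 [H2 [H3 [H4 H5]]]]]]].
      destruct (Sur h') as [h <-]. destruct (Sur u') as [u <-]. destruct (Sur w') as [w <-].
      exists h, u, w. rewrite Hi, !Hp, !HXY. auto. }
  exists (fun g : reduction G X => exist _ (f (proj1_sig g)) (proj1 (IR _) (proj2_sig g)) : reduction H Y).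
  split; [split|split; [|split; [|split]]].
  - intros a a' E. apply (f_equal (@proj1_sig _ _)) in E. simpl in E. apply sig_ext. auto.
  - intros [p hp]. destruct (Sur p) as [g <-]. exists (exist _ g (proj2 (IR g) hp)). apply sig_ext. reflexivity.
  - intros a b. simpl. apply Hc.
  - intros a b c. simpl. apply Hp.
  - intros a b. simpl. apply Hi.
  - intros V. simpl. split.
    + intros [V0 [O0 E0]]. exists (fun g => V0 (f g)). split. apply Ho; auto.
      intro g. rewrite E0. simpl. tauto.
    + intros [V1 [O1 E1]]. exists (fun p => exists g, f g = p /\ V1 g). split.
      * apply (proj2 (Ho _)).
        assert (Eq : (fun a => exists g, f g = f a /\ V1 g) = V1).
        { apply pred_ext. intro a. split. intros [g [E V2]]. apply Inj in E. subst; auto.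
          intro; exists a; auto. }
        rewrite Eq. exact O1.
      * intros [p hp]. simpl. destruct (Sur p) as [g <-].
        pose proof (E1 (exist _ g (proj2 (IR g) hp))) as E2. simpl in E2.
        match type of E2 with (V ?t <-> _) => assert (E3 : t = exist _ (f g) hp) by (apply sig_ext; reflexivity); rewrite E3 in E2 end.
        rewrite E2. split; [intro; exists g; auto|].
        intros [g' [E V2]]. apply Inj in E. subst; auto.
Qed.
Lemma Phi_iso {W : WQLO} (L : PGraph W) (FA : finitely_aligned L) :
  TG_iso (SpiTG L) (PathTG L) (Phi L).
Proof. split; [split|split; [|split; [|split]]].
  - intros a a' E. apply Phi_inj. now rewrite E.
  - intro b. apply Phi_surj.
  - intros a b. simpl. apply Phi_composable.
  - intros a b c. simpl. apply Phi_prod.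
  - intros a b. simpl. apply Phi_inv.
  - intro V. simpl. split. apply Phi_open_fwd; auto. apply Phi_open_bwd.
Qed.

Lemma units_iff {W : WQLO} (L : PGraph W) (u : SpiG L) :
  spi_units_bd L u <-> path_units_bd L (Phi L u).
Proof. split.
  - intros [x [v [Bx [Rx Hu]]]]. exists x. split; auto. apply proj_compG.
    rewrite (class_img L _ _ Hu). simpl. rewrite deg_vid, qmul_Vr. f_equal; [f_equal|];
    apply pred_ext; apply dot_vid; auto; apply (proj2_sig x).
  - intros [x [Bx E]]. apply proj_compG in E.
    destruct (f_ne L _ (proj2_sig x)) as [l Hl].
    exists x, (rng l). split; auto. split. apply (f_vert L _ (proj2_sig x)); auto.
    apply class_spec. split. simpl. rewrite src_vid. split; auto. apply (f_vert L _ (proj2_sig x)); auto.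
    rewrite E. simpl. rewrite deg_vid, qmul_Vr. f_equal; [f_equal|];
    apply pred_ext; apply dot_vid; try apply (proj2_sig x); apply (f_vert L _ (proj2_sig x)); auto.
Qed.

Theorem theorem6p6 (W : WQLO) (L : PGraph W) :
  finitely_aligned L ->
  (exists Phi : SpiTG L -> PathTG L,
     (forall (C : SpiG L) a b x, proj1_sig C (a, b, x) ->
        same L (proj1_sig (gp_x L (Phi C))) (dot L a x) /\
        gp_q L (Phi C) = qmul (deg a) (qinv (deg b)) /\
        same L (proj1_sig (gp_y L (Phi C))) (dot L b x)) /\
     TG_iso (SpiTG L) (PathTG L) Phi) /\
  (exists Psi : reduction (SpiTG L) (spi_units_bd L) ->
                reduction (PathTG L) (path_units_bd L),
     TG_iso (reduction (SpiTG L) (spi_units_bd L))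
            (reduction (PathTG L) (path_units_bd L)) Psi).
Proof.
  intro FA. split.
  - exists (Phi L). split; [|apply Phi_iso; auto].
    intros C a b x HC. destruct (compG_comp L _ _ _ _ (class_img L _ _ HC)) as [E1 [E2 E3]].
    split; [|split; auto]; intro z; [rewrite E1|rewrite E3]; tauto.
  - apply (red_iso (SpiTG L) (PathTG L) (Phi L)). apply Phi_iso; auto. apply units_iff.
Qed.
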